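(* Let $(R,\mathfrak m,k)$ be a complete Noetherian local ring, $E=E_R(k)$, $L$ an $R$-module, and $S\subseteq L$ a subset. Then $\operatorname{tr}_{S,L}(R)=\operatorname{ann}_R\big(0_E^{\mathrm{cl}_{S,L}}\big)$.
   Context: For an $R$-module $N$, $\operatorname{tr}_{S,L}(N)$ is the submodule of $N$ generated by $\{f(s): f\in\operatorname{Hom}_R(L,N),\ s\in S\}$. For $R$-modules $N\subseteq M$, $N^{\mathrm{cl}_{S,L}}_M=\{u\in M: s\otimes u\in\operatorname{im}(L\otimes_R N\to L\otimes_R M)\text{ for all }s\in S\}$; in particular $0^{\mathrm{cl}_{S,L}}_E=\{u\in E: s\otimes u=0\text{ in }L\otimes_R E\text{ for all } s\in S\}$. *)

(* Defs.v *)
From HB Require Import structures.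
From mathcomp Require Import all_boot all_order all_algebra.
Set Implicit Arguments. Unset Strict Implicit. Unset Printing Implicit Defensive.
Import GRing.Theory.
Local Open Scope ring_scope.

Section CommAlg.
Variable R : comUnitRingType.

Definition is_ideal (I : R -> Prop) : Prop :=
  I 0 /\ (forall x y, I x -> I y -> I (x + y)) /\ (forall r x, I x -> I (r * x)).

Definition noetherian : Prop :=
  forall I : R -> Prop, is_ideal I ->
    exists s : seq R, forall x, I x <->
      exists c : 'I_(size s) -> R, x = \sum_(i < size s) c i * s`_i.

(** The non-units; R is local iff they are closed under addition
    (then they form the unique maximal ideal m). *)
Definition mx (x : R) : Prop := x \isn't a GRing.unit.
Definition local_ring : Prop := forall x y, mx x -> mx y -> mx (x + y).

Fixpoint mpow (n : nat) : R -> Prop :=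
  match n with
  | 0 => fun _ => True
  | n'.+1 => fun x => exists (k : nat) (a b : 'I_k -> R),
       (forall i, mx (a i)) /\ (forall i, mpow n' (b i)) /\ x = \sum_(i < k) a i * b i
  end.

Definition madic_complete : Prop :=
  forall x : nat -> R,
    (forall n, exists N, forall i j, (N <= i)%N -> (N <= j)%N -> mpow n (x i - x j)) ->
    exists y, forall n, exists N, forall i, (N <= i)%N -> mpow n (x i - y).

Definition is_submodule (M : lmodType R) (P : M -> Prop) : Prop :=
  P 0 /\ (forall r u v, P u -> P v -> P (r *: u + v)).

Definition injective_module (E : lmodType R) : Prop :=
  forall (A B : lmodType R) (i : {linear A -> B}) (f : {linear A -> E}),
    injective i -> exists g : {linear B -> E}, forall a, g (i a) = f a.

(** [e0] generates a copy of the residue field k = R/m inside E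
    (k -> E, 1 + m |-> e0, is an injective R-linear map), and E is an
    essential extension of that copy, and E is injective:
    i.e. E is an injective hull E_R(k) of k. *)
Definition injective_hull_of_residue (E : lmodType R) (e0 : E) : Prop :=
  [/\ e0 != 0,
      forall a, mx a -> a *: e0 = 0,
      forall P : E -> Prop, is_submodule P -> (exists u, P u /\ u <> 0) ->
        exists v, [/\ P v, v <> 0 & exists t, v = t *: e0]
    & injective_module E].

Definition bilinear_map (L N M : lmodType R) (b : L -> N -> M) : Prop :=
  (forall r l1 l2 n, b (r *: l1 + l2) n = r *: b l1 n + b l2 n) /\
  (forall r l n1 n2, b l (r *: n1 + n2) = r *: b l n1 + b l n2).

(** [s (x) u = 0] in [L (x)_R N]: by the universal property of the tensor
    product, the pure tensor vanishes iff every R-bilinear map kills (s,u). *)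
Definition tensor_zero (L N : lmodType R) (s : L) (u : N) : Prop :=
  forall (M : lmodType R) (b : L -> N -> M), bilinear_map b -> b s u = 0.

Definition trace_SL (L : lmodType R) (S : L -> Prop) (x : R) : Prop :=
  exists (k : nat) (r : 'I_k -> R) (f : 'I_k -> {linear L -> R^o}) (s : 'I_k -> L),
    (forall i, S (s i)) /\ x = \sum_(i < k) r i * (f i (s i) : R).

Definition zero_cl (L : lmodType R) (S : L -> Prop) (N : lmodType R) (u : N) : Prop :=
  forall s, S s -> tensor_zero s u.

Definition annihilator (M : lmodType R) (P : M -> Prop) (r : R) : Prop :=
  forall u, P u -> r *: u = 0.

End CommAlg.

(* Main.v *)
Require Import Defs.
From HB Require Import structures.
From mathcomp Require Import all_boot all_order all_algebra.
From Stdlib Require Import ClassicalEpsilon Classical.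
From mathcomp Require Import ring.
Set Implicit Arguments. Unset Strict Implicit. Unset Printing Implicit Defensive.
Import GRing.Theory.
Local Open Scope ring_scope.



Definition cid {A : Type} {P : A -> Prop} (h : exists x, P x) : {x | P x} :=
  constructive_indefinite_description P h.

Definition catf (T : Type) k1 k2 (f1 : 'I_k1 -> T) (f2 : 'I_k2 -> T) : 'I_(k1 + k2) -> T :=
  fun i => match split i with inl j => f1 j | inr j => f2 j end.

Lemma catfP (T : Type) k1 k2 (f1 : 'I_k1 -> T) (f2 : 'I_k2 -> T) (P : T -> Prop) :
  (forall i, P (f1 i)) -> (forall i, P (f2 i)) -> forall i, P (catf f1 f2 i).
Proof. by move=> h1 h2 i; rewrite /catf; case: (split i). Qed.

Lemma big_catf (V : nmodType) (T : Type) k1 k2 (f1 : 'I_k1 -> T) (f2 : 'I_k2 -> T) (F : T -> V) :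
  \sum_(i < k1 + k2) F (catf f1 f2 i) = \sum_(i < k1) F (f1 i) + \sum_(i < k2) F (f2 i).
Proof.
rewrite big_split_ord /catf; congr (_ + _); apply: eq_bigr => i _.
- by rewrite (unsplitK (inl i)).
- by rewrite (unsplitK (inr i)).
Qed.

Section Ideals.
Variable R : comUnitRingType.

Definition sums (P : R -> Prop) (x : R) :=
  exists k (f : 'I_k -> R), (forall i, P (f i)) /\ x = \sum_(i < k) f i.

Lemma sums0 P : sums P 0.
Proof. by exists 0%N, (fun _ => 0); split => [[]//|]; rewrite big_ord0. Qed.

Lemma sums1 (P : R -> Prop) x : P x -> sums P x.
Proof. by move=> h; exists 1%N, (fun _ => x); split => //; rewrite big_ord1. Qed.

Lemma sumsD P x y : sums P x -> sums P y -> sums P (x + y).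
Proof.
move=> [k1 [f1 [h1 ->]]] [k2 [f2 [h2 ->]]].
exists (k1 + k2)%N, (catf f1 f2); split; first exact: catfP.
by rewrite (big_catf f1 f2 id).
Qed.

Lemma sums_ind (P Q : R -> Prop) : Q 0 -> (forall x y, Q x -> Q y -> Q (x + y)) ->
  (forall x, P x -> Q x) -> forall x, sums P x -> Q x.
Proof.
move=> h0 hD hP x [k [f [hf ->]]].
apply: (big_ind Q) => // i _; exact: hP.
Qed.

Lemma sums_mono (P P' : R -> Prop) x : (forall y, P y -> P' y) -> sums P x -> sums P' x.
Proof. by move=> h [k [f [hf ->]]]; exists k, f; split => // i; apply: h. Qed.

Lemma sumsM (P : R -> Prop) r x : (forall y, P y -> P (r * y)) -> sums P x -> sums P (r * x).
Proof.
move=> h [k [f [hf ->]]]; exists k, (fun i => r * f i); split; first by move=> i; apply: h.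
by rewrite mulr_sumr.
Qed.

Lemma ideal_sums (I : R -> Prop) x : is_ideal I -> sums I x -> I x.
Proof. by case=> h0 [hD _]; apply: sums_ind. Qed.

Lemma ideal_sum (I : R -> Prop) k (f : 'I_k -> R) : is_ideal I -> (forall i, I (f i)) ->
  I (\sum_(i < k) f i).
Proof. by move=> hI hf; apply: ideal_sums => //; exists k, f. Qed.

Lemma ideal_sub (I : R -> Prop) x y : is_ideal I -> I x -> I y -> I (x - y).
Proof.
case=> h0 [hD hM] hx hy; apply: hD => //.
by rewrite -mulN1r; apply: hM.
Qed.

Lemma ideal_Mr (I : R -> Prop) x r : is_ideal I -> I x -> I (x * r).
Proof. by case=> _ [_ hM] hx; rewrite mulrC; apply: hM. Qed.

Fixpoint ipow (T : R -> Prop) (n : nat) : R -> Prop :=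
  match n with
  | 0 => fun _ => True
  | n'.+1 => sums (fun y => exists a b, T a /\ ipow T n' b /\ y = a * b)
  end.


Lemma ipow_ideal T n : is_ideal (ipow T n).
Proof.
elim: n => [|n IH] /=; first by [].
split; first exact: sums0.
split; first by move=> x y; apply: sumsD.
move=> r x; apply: sumsM => y [a [b [ha [hb ->]]]].
exists a, (r * b); split => //; split; last by rewrite mulrCA.
by case: IH => _ [_ hM]; apply: hM.
Qed.

Lemma ipowS T n x : ipow T n.+1 x -> ipow T n x.
Proof.
elim: n x => [//|n IH] x /=.
apply: sums_mono => y [a [b [ha [hb ->]]]].
by exists a, b; split => //; split => //; apply: IH.
Qed.

Lemma ipow_le T m n x : (m <= n)%N -> ipow T n x -> ipow T m x.
Proof.
move=> /subnK <-; elim: (n - m)%N x => [|d IH] x; first by rewrite add0n.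
by rewrite addSn => /ipowS; apply: IH.
Qed.

Lemma ipow_ext T T' n x : (forall z, T z <-> T' z) -> ipow T n x -> ipow T' n x.
Proof.
move=> hT; elim: n x => [//|n IH] x /=.
apply: sums_mono => y [a [b [ha [hb ->]]]].
by exists a, b; split; [apply/hT| split => //; apply: IH].
Qed.

Lemma ipow_mul1 T n a b : T a -> ipow T n b -> ipow T n.+1 (a * b).
Proof. by move=> ha hb; apply: sums1; exists a, b. Qed.

Lemma mpow_ipow n x : mpow n x <-> ipow (@mx R) n x.
Proof.
elim: n x => [//|n IH] x /=; split.
- move=> [k [a [b [ha [hb ->]]]]].
  exists k, (fun i => a i * b i); split => // i.
  by exists (a i), (b i); split => //; split => //; apply/IH.
- move=> [k [f [hf ->]]].
  pose g i := cid (hf i).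
  pose a i := sval (g i).
  pose b i := sval (cid (svalP (g i))).
  exists k, a, b; split; [|split].
  + by move=> i; case: (svalP (cid (svalP (g i)))).
  + by move=> i; apply/IH; case: (svalP (cid (svalP (g i)))) => _ [].
  + by apply: eq_bigr => i _; case: (svalP (cid (svalP (g i)))) => _ [].
Qed.

Lemma ipow_split (T : R -> Prop) g p q x : 
  ipow (fun z => exists t c, T t /\ z = t + c * g) (p + q) x ->
  exists t z, ipow T p t /\ x = t + g ^+ q * z.
Proof.
move: {2}(p + q)%N (erefl (p + q)%N) => n; elim: n p q x => [|n IH] p q x.
  move=> /eqP; rewrite addn_eq0 => /andP[/eqP -> /eqP ->] _.
  by exists x, 0; rewrite mulr0 addr0.
case: p => [|p]; first by move=> _ _; exists x, 0; rewrite mulr0 addr0.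
case: q => [|q]; first by move=> _ _; exists 0, x; split; [case: (ipow_ideal T p.+1)|rewrite expr0 mul1r add0r].
move=> /eqP; rewrite addSn eqSS => /eqP hn /= hx.
move: x hx; apply: (sums_ind (Q := fun x => exists t z, ipow T p.+1 t /\ x = t + g ^+ q.+1 * z)).
- by exists 0, 0; split; [case: (ipow_ideal T p.+1)|rewrite mulr0 addr0].
- move=> x1 x2 [t1 [z1 [h1 ->]]] [t2 [z2 [h2 ->]]].
  exists (t1 + t2), (z1 + z2); split; first by case: (ipow_ideal T p.+1) => _ [hD _]; apply: hD.
  by rewrite mulrDr addrACA.
- move=> y [a [b [[t0 [c [ht0 ->]]] [hb ->]]]].
  have [t1 [z1 [h1 e1]]] := IH p q.+1 b hn hb.
  have [t2 [z2 [h2 e2]]] := IH p.+1 q b ltac:(by rewrite addSn -addnS) ltac:(by rewrite addSn -addnS).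
  exists (t0 * t1 + c * g * t2), (t0 * z1 + c * z2); split.
    case: (ipow_ideal T p.+1) => _ [hD hM]; apply: hD; first exact: ipow_mul1.
    exact: hM.
  rewrite mulrDl {1}e1 {1}e2 exprS; ring.
Qed.

End Ideals.



Section Noeth.
Variable R : comUnitRingType.
Hypothesis hnoeth : noetherian R.
Hypothesis hloc : local_ring R.

Definition span (gs : seq R) (z : R) :=
  exists c : 'I_(size gs) -> R, z = \sum_(i < size gs) c i * gs`_i.

Lemma span_cons g gs z : span (g :: gs) z <-> exists t c, span gs t /\ z = t + c * g.
Proof.
split.
- move=> [c ->]; rewrite big_ord_recl /=.
  exists (\sum_(i < size gs) c (lift ord0 i) * gs`_i), (c ord0); split.
    by exists (fun i => c (lift ord0 i)).
  by rewrite addrC.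
- move=> [t [c0 [[c ->] ->]]].
  exists (fun i => if unlift ord0 i is Some j then c j else c0).
  rewrite big_ord_recl /= unlift_none addrC; congr (_ + _).
  by apply: eq_bigr => i _; rewrite liftK.
Qed.

Lemma span_nth gs (i : 'I_(size gs)) : span gs gs`_i.
Proof.
exists (fun j => if j == i then 1 else 0).
rewrite (bigD1 i) //= eqxx mul1r big1 ?addr0 // => j /negbTE ->; by rewrite mul0r.
Qed.

Lemma span_ideal gs : is_ideal (span gs).
Proof.
split; first by exists (fun _ => 0); rewrite big1 // => i _; rewrite mul0r.
split.
- move=> x y [c1 ->] [c2 ->]; exists (fun i => c1 i + c2 i).
  by rewrite -big_split /=; apply: eq_bigr => i _; rewrite mulrDl.
- move=> r x [c ->]; exists (fun i => r * c i).
  by rewrite mulr_sumr; apply: eq_bigr => i _; rewrite mulrA.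
Qed.

Lemma noeth_span (I : R -> Prop) : is_ideal I -> exists gs, forall z, I z <-> span gs z.
Proof. by move=> /hnoeth [s hs]; exists s. Qed.

Lemma exists_max (F : (R -> Prop) -> Prop) :
  (forall Q, F Q -> is_ideal Q) -> (exists Q, F Q) ->
  exists Q, F Q /\ forall Q', F Q' -> (forall z, Q z -> Q' z) -> forall z, Q' z -> Q z.
Proof.
move=> hF [Q0 hQ0]; apply: NNPP => hno.
have step : forall Q : {Q | F Q}, exists Q' : {Q | F Q},
    (forall z, sval Q z -> sval Q' z) /\ exists z, sval Q' z /\ ~ sval Q z.
  move=> [Q hQ]; apply: NNPP => h; apply: hno; exists Q; split => // Q' hQ' hsub z hz.
  apply: NNPP => hnz; apply: h; exists (exist _ Q' hQ'); split => //; by exists z.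
pose nx (Q : {Q | F Q}) := sval (cid (step Q)).
pose ch := fix ch (n : nat) : {Q | F Q} := match n with 0 => exist _ Q0 hQ0 | n'.+1 => nx (ch n') end.
have chS n z : sval (ch n) z -> sval (ch n.+1) z.
  by move=> h; have [+ _] := svalP (cid (step (ch n))); apply.
have chle m n z : (m <= n)%N -> sval (ch m) z -> sval (ch n) z.
  move=> /subnK <-; elim: (n - m)%N => [|d IH] h; first by rewrite add0n.
  by rewrite addSn; apply: chS; apply: IH.
pose U z := exists n, sval (ch n) z.
have hU : is_ideal U.
  split; first by exists 0%N; case: (hF _ hQ0).
  split.
  - move=> x y [n hx] [m hy]; exists (maxn n m).
    have := hF _ (svalP (ch (maxn n m))) => -[_ [hD _]]; apply: hD.
      by apply: chle hx; rewrite leq_maxl.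
    by apply: chle hy; rewrite leq_maxr.
  - move=> r x [n hx]; exists n.
    by have := hF _ (svalP (ch n)) => -[_ [_ hM]]; apply: hM.
have [gs hgs] := noeth_span hU.
have hgi (i : 'I_(size gs)) : U gs`_i by apply/hgs; apply: span_nth.
pose ni i := sval (cid (hgi i)).
pose N := (\max_(i < size gs) ni i)%N.
have hN : forall z, U z -> sval (ch N) z.
  move=> z /hgs [c ->]; apply: ideal_sum; first exact: (hF _ (svalP (ch N))).
  move=> i; rewrite mulrC; apply: ideal_Mr; first exact: (hF _ (svalP (ch N))).
  apply: (chle (ni i)); first by rewrite /N (leq_bigmax i).
  exact: (svalP (cid (hgi i))).
have [_ [z [hz hnz]]] := svalP (cid (step (ch N))).
by apply: hnz; apply: hN; exists N.+1.
Qed.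

Lemma mx_ideal : is_ideal (@mx R).
Proof.
split; first by rewrite /mx unitr0.
split; first exact: hloc.
move=> r x; rewrite /mx unitrM => /negbTE ->; by rewrite andbF.
Qed.

Lemma unit_1m (a : R) : mx a -> (1 - a) \is a GRing.unit.
Proof.
move=> ha; apply: NNPP => h.
have : mx ((1 - a) + a) by apply: hloc => //; apply/negP.
by rewrite subrK /mx unitr1.
Qed.

Lemma mx_unitE (a : R) : ~ mx a -> a \is a GRing.unit.
Proof. by rewrite /mx => /negP; rewrite negbK. Qed.

Lemma nilp gs (Q : R -> Prop) : is_ideal Q ->
  (forall z, span gs z -> exists k, Q (z ^+ k)) ->
  exists p, forall x, ipow (span gs) p x -> Q x.
Proof.
move=> hQ; elim: gs => [|g gs IH] hnil.
  exists 1%N => x /=; apply: sums_ind; [by case: hQ| by case: hQ => _ []|].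
  move=> y [a [b [[c ->] [_ ->]]]]; rewrite big_ord0 mul0r; by case: hQ.
have [p hp] : exists p, forall x, ipow (span gs) p x -> Q x.
  apply: IH => z hz; apply: hnil; apply/span_cons.
  by exists z, 0; rewrite mul0r addr0.
have [k hk] : exists k, Q (g ^+ k).
  apply: hnil; apply/span_cons; exists 0, 1; split; last by rewrite mul1r add0r.
  by case: (span_ideal gs).
exists (p + k)%N => x hx.
have hx' : ipow (fun z => exists t c, span gs t /\ z = t + c * g) (p + k) x.
  by apply: ipow_ext hx => z; apply: span_cons.
have [t [z [ht ->]]] := ipow_split hx'.
case: hQ => _ [hD hM]; apply: hD; first exact: hp.
by rewrite mulrC; apply: hM.
Qed.

Lemma mpow_ideal n : is_ideal (@mpow R n).
Proof.
have := ipow_ideal (@mx R) n => -[h0 [hD hM]].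
split; first by apply/mpow_ipow.
split; first by move=> x y /mpow_ipow hx /mpow_ipow hy; apply/mpow_ipow; apply: hD.
by move=> r x /mpow_ipow hx; apply/mpow_ipow; apply: hM.
Qed.

Lemma mpow_le m n (x : R) : (m <= n)%N -> mpow n x -> @mpow R m x.
Proof. by move=> hmn /mpow_ipow hx; apply/mpow_ipow; apply: ipow_le hx. Qed.

Lemma mpow_nil (Q : R -> Prop) : is_ideal Q -> (forall a, mx a -> exists k, Q (a ^+ k)) ->
  exists p, forall x, mpow p x -> Q x.
Proof.
move=> hQ ha.
have [gs hgs] := noeth_span mx_ideal.
have [p hp] := nilp hQ (fun z hz => ha z (proj2 (hgs z) hz)).
exists p => x /mpow_ipow hx; apply: hp; apply: ipow_ext hx => z; exact: hgs.
Qed.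

Theorem krull (I : R -> Prop) x : is_ideal I ->
  (forall n, exists i b, I i /\ mpow n b /\ x = i + b) -> I x.
Proof.
move=> hI hx.
pose J0 z := exists i a, I i /\ mx a /\ z = i + a * x.
pose IX z := exists i t, I i /\ z = i + t * x.
have hJ0 : is_ideal J0.
  case: hI => hi0 [hiD hiM]; case: mx_ideal => hm0 [hmD hmM].
  split; first by exists 0, 0; rewrite mul0r addr0.
  split.
  - move=> y z [i1 [a1 [h1 [ha1 ->]]]] [i2 [a2 [h2 [ha2 ->]]]].
    exists (i1 + i2), (a1 + a2); split; first exact: hiD.
    by split; [exact: hmD| rewrite mulrDl addrACA].
  - move=> r z [i [a [hi [ha ->]]]]; exists (r * i), (r * a); split; first exact: hiM.
    by split; [exact: hmM| rewrite mulrDr mulrA].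
pose F (Q : R -> Prop) := is_ideal Q /\ (forall z, J0 z -> Q z) /\
   (forall y, Q y -> IX y -> J0 y).
have [Q [[hQ [hJQ hQX]] hmax]] : exists Q, F Q /\ forall Q', F Q' -> (forall z, Q z -> Q' z) -> forall z, Q' z -> Q z.
  apply: exists_max; first by move=> Q [].
  by exists J0; split => //; split.
have hpow : forall a, mx a -> exists k, Q (a ^+ k).
  move=> a ha.
  pose C k z := Q (a ^+ k * z).
  have hC k : is_ideal (C k).
    case: hQ => h0 [hD hM]; split; first by rewrite /C mulr0.
    split; first by move=> y z hy hz; rewrite /C mulrDr; apply: hD.
    by move=> r y hy; rewrite /C mulrCA; apply: hM.
  have [C' [[K hK] hmaxC]] : exists C', (exists k, forall z, C' z <-> C k z) /\
      forall Q', (exists k, forall z, Q' z <-> C k z) -> (forall z, C' z -> Q' z) -> forall z, Q' z -> C' z.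
    apply: exists_max; last by exists (C 0%N), 0%N.
    move=> Q' [k hk]; have [h0 [hD hM]] := hC k.
    split; first by apply/hk.
    split; first by move=> y z /hk hy /hk hz; apply/hk; apply: hD.
    by move=> r y /hk hy; apply/hk; apply: hM.
  have hCK : forall z, C K.+1 z -> C K z.
    move=> z hz; apply/hK; apply: (hmaxC (C K.+1)) => //; first by exists K.+1.
    move=> y /hK; rewrite /C exprS -mulrA => hy.
    by case: hQ => _ [_ hM]; apply: hM.
  exists K.
  pose Q' z := exists q w, Q q /\ z = q + a ^+ K * w.
  have hQ'Q : forall z, Q' z -> Q z.
    apply: hmax.
    - split.
        case: hQ => h0 [hD hM]; split; first by exists 0, 0; rewrite mulr0 addr0.
        split.
        + move=> y z [q1 [w1 [h1 ->]]] [q2 [w2 [h2 ->]]]; exists (q1 + q2), (w1 + w2).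
          by split; [exact: hD| rewrite mulrDr addrACA].
        + move=> r y [q [w [hq ->]]]; exists (r * q), (r * w).
          by split; [exact: hM| rewrite mulrDr mulrCA].
      split; first by move=> z hz; exists z, 0; split; [exact: hJQ| rewrite mulr0 addr0].
      move=> y [q [w [hq ->]]] hy; apply: hQX => //.
      have hay : Q (a * (q + a ^+ K * w)).
        apply: hJQ; case: hy => [i [t [hi ey]]].
        exists (a * i), (a * t); split; first by case: hI => _ [_ hM]; apply: hM.
        by split; [case: mx_ideal => _ [_ hM]; rewrite mulrC; exact: hM| rewrite ey mulrDr mulrA].
      have hw : C K.+1 w.
        rewrite /C exprS -mulrA.
        have -> : a * (a ^+ K * w) = a * (q + a ^+ K * w) - a * q by rewrite mulrDr addrC addKr.
        apply: ideal_sub => //; rewrite mulrC; exact: ideal_Mr.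
      case: hQ => _ [hD _]; apply: hD => //; exact: hCK.
    - by move=> z hz; exists z, 0; rewrite mulr0 addr0.
  by apply: hQ'Q; exists 0, 1; rewrite mulr1 add0r; split => //; case: hQ.
have [p hp] := mpow_nil hQ hpow.
have [i [b [hi [hb ex]]]] := hx p.
have hQx : Q x.
  rewrite ex; case: hQ => _ [hD _]; apply: hD; last exact: hp.
  by apply: hJQ; exists i, 0; rewrite mul0r addr0; split => //; split => //; case: mx_ideal.
have [i' [a [hi' [ha ex']]]] : J0 x by apply: hQX => //; exists 0, 1; rewrite mul1r add0r; split => //; case: hI.
have -> : x = (1 - a)^-1 * i'.
  apply: (canRL (mulKr (unit_1m ha))).
  by rewrite mulrBl mul1r {1}ex' addrK.
by rewrite mulrC; apply: ideal_Mr.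
Qed.

End Noeth.



Definition pb {T} (P : T -> Prop) : pred T :=
  fun x => if excluded_middle_informative (P x) then true else false.
Lemma pbP {T} (P : T -> Prop) x : reflect (P x) (pb P x).
Proof. rewrite /pb; case: excluded_middle_informative => h; constructor => //. Qed.

Section Sub.
Variables (R : comUnitRingType) (M : lmodType R) (P : M -> Prop).
Definition Pc (x : M) := is_submodule P -> P x.
Record subM := SubM { sval_ : M; sprop_ : pb Pc sval_ }.
HB.instance Definition _ := [isSub for sval_].
HB.instance Definition _ := [Choice of subM by <:].
Lemma pb_closed : subsemimod_closed (pb Pc).
Proof.
split; [split|].
- by apply/pbP => -[].
- move=> u v /pbP hu /pbP hv; apply/pbP => hP; case: (hP) => h0 hc.
  by have := hc 1 u v (hu hP) (hv hP); rewrite scale1r.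
- move=> a u /pbP hu; apply/pbP => hP; case: (hP) => h0 hc.
  by have := hc a u 0 (hu hP) h0; rewrite addr0.
Qed.
HB.instance Definition _ := @GRing.SubChoice_isSubLmodule.Build R M (pb Pc) subM pb_closed.
Lemma subM_val_lin : linear (fun x : subM => (sval_ x : M)).
Proof. by move=> a u v. Qed.
Lemma getP (hP : is_submodule P) (x : subM) : P (sval_ x).
Proof. exact: (elimT (pbP _ _) (sprop_ x) hP). Qed.
Definition mkSub (x : M) (h : P x) : subM := SubM (introT (pbP Pc _) (fun _ => h)).
Lemma sval_inj : injective sval_.
Proof. exact: val_inj. Qed.
End Sub.

Section Pack.
Variables (R : comUnitRingType) (A B : lmodType R) (f : A -> B) (hf : linear f).
Definition mkLin : {linear A -> B} := HB.pack f (GRing.isLinear.Build R A B _ f hf).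
Lemma mkLinE x : mkLin x = f x. Proof. by []. Qed.
End Pack.

Section Matlis.
Variable R : comUnitRingType.
Hypothesis hnoeth : noetherian R.
Hypothesis hloc : local_ring R.
Hypothesis hcompl : madic_complete R.
Variables (E : lmodType R) (e0 : E).
Hypothesis hE : injective_hull_of_residue e0.

Lemma e0_neq0 : e0 != 0. Proof. by case: hE. Qed.
Lemma e0_mx a : mx a -> a *: e0 = 0. Proof. by case: hE => _ h _ _; apply: h. Qed.
Lemma E_inj (A B : lmodType R) (i : {linear A -> B}) (f : {linear A -> E}) :
  injective i -> exists g : {linear B -> E}, forall a, g (i a) = f a.
Proof. by case: hE => _ _ _ h; apply: h. Qed.

Lemma wd_e0 (t t' : R) : (t - t') \is a GRing.unit -> False -> t *: e0 = t' *: e0.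
Proof. by []. Qed.

Lemma mx_or_unit (a : R) : mx a \/ a \is a GRing.unit.
Proof. rewrite /mx; case: (a \is a GRing.unit); by [right|left]. Qed.

(* detection: ann_R(ann_E(K)) = K *)
Lemma detect (K : R -> Prop) (x : R) : is_ideal K -> ~ K x ->
  exists u : E, (forall a, K a -> a *: u = 0) /\ x *: u = e0.
Proof.
move=> hK hx.
pose P (y : R^o) := exists t j, K j /\ y = j + t * x.
have hP : is_submodule P.
  case: hK => h0 [hD hM]; split; first by exists 0, 0; rewrite mul0r addr0.
  move=> r u v [t1 [j1 [h1 ->]]] [t2 [j2 [h2 ->]]].
  exists (r * t1 + t2), (r * j1 + j2); split; first by apply: hD => //; apply: hM.
  change (r * (j1 + t1 * x) + (j2 + t2 * x) = (r * j1 + j2) + (r * t1 + t2) * x :> R); ring.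
have wd t j t' j' : K j -> K j' -> j + t * x = j' + t' * x -> t *: e0 = t' *: e0.
  move=> hj hj' e; case: (mx_or_unit (t - t')) => [hm|hu].
    by apply/eqP; rewrite -subr_eq0 -scalerBl e0_mx.
  exfalso; apply: hx.
  have -> : x = (t - t')^-1 * (j' - j).
    apply: (canRL (mulKr hu)); rewrite mulrBl.
    have -> : j' - j = t * x - t' * x.
      have ej' : j' = j + t * x - t' * x by rewrite e addrK.
      rewrite ej'; ring.
    by [].
  by rewrite mulrC; apply: ideal_Mr => //; apply: ideal_sub.
pose f (y : subM P) : E := sval (cid (getP hP y)) *: e0.
have hfl : linear f.
  move=> a y1 y2; rewrite /f.
  case: (cid (getP hP (a *: y1 + y2))) => t3 [j3 [h3 e3]] /=.
  case: (cid (getP hP y1)) => t1 [j1 [h1 e1]] /=.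
  case: (cid (getP hP y2)) => t2 [j2 [h2 e2]] /=.
  rewrite scalerA -scalerDl; apply: (wd _ _ _ (a * j1 + j2) h3).
    by case: hK => _ [hD hM]; apply: hD => //; apply: hM.
  rewrite -e3 /= e1 e2.
  change (a * (j1 + t1 * x) + (j2 + t2 * x) = (a * j1 + j2) + (a * t1 + t2) * x :> R); ring.
have [g hg] := @E_inj _ _ (mkLin (@subM_val_lin R _ P)) (mkLin hfl) (@sval_inj _ _ P).
exists (g 1); split.
- move=> a ha.
  have hPa : P a by exists 0, a; rewrite mul0r addr0.
  rewrite -linearZ /= (mulr1 a : a *: (1 : R^o) = a).
  have := hg (mkSub hPa); rewrite !mkLinE /= => ->; rewrite /f.
  case: (cid (getP hP (mkSub hPa))) => t [j [hj ej]] /=.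
  rewrite -(scale0r e0); apply: (wd _ _ _ _ hj ha); by rewrite mul0r addr0.
- have hPx : P x by exists 1, 0; rewrite mul1r add0r; split => //; case: hK.
  have := hg (mkSub hPx); rewrite !mkLinE /= => hgx.
  rewrite -linearZ /= (mulr1 x : x *: (1 : R^o) = x) hgx /f.
  case: (cid (getP hP (mkSub hPx))) => t [j [hj ej]] /=.
  rewrite -[RHS]scale1r; apply: (wd _ _ _ 0 hj); first by case: hK.
  by rewrite -ej mul1r add0r.
Qed.

Lemma socle (w : E) : (forall a, mx a -> a *: w = 0) -> exists t, w = t *: e0.
Proof.
move=> hw; case: (eqVneq w 0) => [->|wn0]; first by exists 0; rewrite scale0r.
pose P (v : E) := exists t, v = t *: w.
have hP : is_submodule P.
  split; first by exists 0; rewrite scale0r.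
  by move=> r u v [t1 ->] [t2 ->]; exists (r * t1 + t2); rewrite scalerDl scalerA.
have [_ _ hess _] := hE.
have [v [[t ->] vn0 [c ec]]] := hess P hP (ex_intro _ w (conj (ex_intro _ 1 (esym (scale1r w))) (elimN eqP wn0))).
case: (mx_or_unit t) => [hm|hu]; first by exfalso; apply: vn0; apply: hw.
exists (t^-1 * c); rewrite -scalerA -ec scalerA mulVr // scale1r //.
Qed.

Lemma cogen (M : lmodType R) (w : M) : w != 0 -> exists pi : {linear M -> E}, pi w = e0.
Proof.
move=> wn0.
pose P (v : M) := exists t, v = t *: w.
have hP : is_submodule P.
  split; first by exists 0; rewrite scale0r.
  by move=> r u v [t1 ->] [t2 ->]; exists (r * t1 + t2); rewrite scalerDl scalerA.
have wd t t' : t *: w = t' *: w -> t *: e0 = t' *: e0.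
  move=> e; case: (mx_or_unit (t - t')) => [hm|hu].
    by apply/eqP; rewrite -subr_eq0 -scalerBl e0_mx.
  exfalso; move/eqP: wn0; apply.
  have : (t - t') *: w = 0 by rewrite scalerBl e subrr.
  by move=> /(congr1 (fun v => (t - t')^-1 *: v)); rewrite scalerA mulVr // scale1r scaler0.
pose f (y : subM P) : E := sval (cid (getP hP y)) *: e0.
have hfl : linear f.
  move=> a y1 y2; rewrite /f.
  case: (cid (getP hP (a *: y1 + y2))) => t3 e3 /=.
  case: (cid (getP hP y1)) => t1 e1 /=.
  case: (cid (getP hP y2)) => t2 e2 /=.
  rewrite scalerA -scalerDl; apply: wd.
  by rewrite -e3 /= e1 e2 scalerDl scalerA.
have [g hg] := @E_inj _ _ (mkLin (@subM_val_lin R _ P)) (mkLin hfl) (@sval_inj _ _ P).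
exists g.
have hPw : P w by exists 1; rewrite scale1r.
have := hg (mkSub hPw); rewrite !mkLinE /= => ->; rewrite /f.
case: (cid (getP hP (mkSub hPw))) => t et /=.
by rewrite -[RHS]scale1r; apply: wd; rewrite -et scale1r.
Qed.

End Matlis.



Section Endo.
Variable R : comUnitRingType.
Hypothesis hnoeth : noetherian R.
Hypothesis hloc : local_ring R.
Hypothesis hcompl : madic_complete R.
Variables (E : lmodType R) (e0 : E).
Hypothesis hE : injective_hull_of_residue e0.

Definition En n (v : E) := forall a : R, mpow n a -> a *: v = 0.
Definition lin (th : E -> E) := forall r u v, th (r *: u + v) = r *: th u + th v.

Lemma lin0 th : lin th -> th 0 = 0.
Proof.
move=> h; have e := h 1 0 0; rewrite !scale1r !addr0 in e.
by apply: (@addrI _ (th 0)); rewrite addr0 -e.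
Qed.

Lemma linB th : lin th -> forall u v, th (u - v) = th u - th v.
Proof.
move=> h u v; have := h (-1) v u; rewrite !scaleN1r => e.
by rewrite addrC e addrC.
Qed.

Lemma En_sub n : is_submodule (En n).
Proof.
split; first by move=> a _; rewrite scaler0.
by move=> r u v hu hv a ha; rewrite scalerDr scalerA mulrC -scalerA hu // hv // scaler0 addr0.
Qed.

Lemma En_le m n v : (m <= n)%N -> En m v -> En n v.
Proof. by move=> hmn hv a ha; apply: hv; apply: mpow_le ha. Qed.

Lemma endo_n n (th : E -> E) : lin th -> exists r, forall v, En n v -> th v = r *: v.
Proof.
move=> hth; elim: n => [|n [r hr]].
  exists 0 => v hv; have : (1 : R) *: v = 0 by apply: hv.
  by rewrite scale1r => ->; rewrite scaler0 lin0.
pose th' v := th v - r *: v.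
have hth' : lin th'.
  move=> a u v; rewrite /th' hth scalerBr scalerDr opprD !scalerA mulrC.
  by rewrite addrACA.
have th'0 : forall v, En n v -> th' v = 0.
  by move=> v hv; rewrite /th' hr // subrr.
have [gs hgs] := noeth_span hnoeth (@mpow_ideal R n).
pose d := size gs.
have hgsn (i : 'I_d) : mpow n gs`_i by apply/hgs; apply: span_nth.
pose Pf (w : {ffun 'I_d -> E}) := exists v, En n.+1 v /\ w = [ffun i : 'I_d => gs`_i *: v].
have hPf : is_submodule Pf.
  split.
    exists 0; split; first by apply: (proj1 (En_sub n.+1)).
    by apply/ffunP => i; rewrite !ffunE scaler0.
  move=> a u w [v1 [h1 ->]] [v2 [h2 ->]]; exists (a *: v1 + v2); split.
    by apply: (proj2 (En_sub n.+1)).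
  apply/ffunP => i; rewrite !ffunE scalerDr !scalerA mulrC.
  done.
have wd v v' : En n.+1 v -> En n.+1 v' -> [ffun i : 'I_d => gs`_i *: v] = [ffun i : 'I_d => gs`_i *: v'] :> {ffun 'I_d -> E} ->
    th' v = th' v'.
  move=> hv hv' e.
  have hvv : En n (v - v').
    move=> a /hgs [c ->]; rewrite scaler_suml; apply: big1 => i _.
    rewrite -scalerA scalerBr.
    have := congr1 (fun w : {ffun 'I_d -> E} => w i) e; rewrite /= !ffunE => ->.
    by rewrite subrr scaler0.
  by apply/eqP; rewrite -subr_eq0 -linB // th'0.
pose f (w : subM Pf) : E := th' (sval (cid (getP hPf w))).
have hfl : linear f.
  move=> a w1 w2; rewrite /f.
  case: (cid (getP hPf (a *: w1 + w2))) => v3 [h3 e3] /=.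
  case: (cid (getP hPf w1)) => v1 [h1 e1] /=.
  case: (cid (getP hPf w2)) => v2 [h2 e2] /=.
  rewrite -hth'; apply: wd => //; first by apply: (proj2 (En_sub n.+1)).
  rewrite -e3 /= e1 e2; apply/ffunP => i; rewrite !ffunE scalerDr !scalerA mulrC.
  done.
have [g hg] := @E_inj _ _ _ hE _ _ (mkLin (@subM_val_lin R _ Pf)) (mkLin hfl) (@sval_inj _ _ Pf).
pose del (j : 'I_d) (e : E) : {ffun 'I_d -> E} := [ffun i : 'I_d => if i == j then e else 0].
have delZ j a e : del j (a *: e) = a *: del j e.
  by apply/ffunP => i; rewrite !ffunE; case: (i == j); rewrite ?scaler0.
have hc j : exists c, g (del j e0) = c *: e0.
  apply: (socle hE) => a ha.
  rewrite -linearZ -delZ (e0_mx hE ha).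
  have -> : del j 0 = 0 by apply/ffunP => i; rewrite !ffunE; case: (i == j).
  by rewrite linear0.
pose c j := sval (cid (hc j)).
exists (r + \sum_(j < d) c j * gs`_j) => v hv.
have hsoc (j : 'I_d) : exists t, gs`_j *: v = t *: e0.
  apply: (socle hE) => a ha; rewrite scalerA; apply: hv.
  by apply/mpow_ipow; apply: (ipow_mul1 ha); apply: (proj1 (mpow_ipow _ _)); apply: hgsn.
have hPv : Pf [ffun i : 'I_d => gs`_i *: v] by exists v.
have := hg (mkSub hPv); rewrite !mkLinE /= /f.
case: (cid (getP hPf (mkSub hPv))) => v' [h' e'] /= hgv.
have e2 : th' v = g [ffun i : 'I_d => gs`_i *: v].
  by rewrite hgv; apply: wd.
have -> : th v = r *: v + th' v by rewrite /th' addrC subrK.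
rewrite e2 scalerDl; congr (_ + _).
have -> : [ffun i : 'I_d => gs`_i *: v] = \sum_(j < d) del j (gs`_j *: v).
  apply/ffunP => i; rewrite sum_ffunE /del (bigD1 i) //= !ffunE eqxx big1 ?addr0 //.
  by move=> j /negbTE hj; rewrite ffunE eq_sym hj.
rewrite linear_sum scaler_suml; apply: eq_bigr => j _.
rewrite -scalerA; case: (hsoc j) => t ->.
rewrite delZ linearZ /=; have := svalP (cid (hc j)); rewrite -/(c j) => ->.
by rewrite !scalerA mulrC.
Qed.

Lemma endo th : lin th -> exists r, forall n v, En n v -> th v = r *: v.
Proof.
move=> hth.
pose rn n := sval (cid (endo_n n hth)).
have hrn n v : En n v -> th v = rn n *: v := svalP (cid (endo_n n hth)) v.
have cauchy : forall N, exists N', forall i j, (N' <= i)%N -> (N' <= j)%N -> mpow N (rn i - rn j).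
  move=> N; exists N => i j hi hj; apply: NNPP => hno.
  have [u [hu hxu]] := detect hE (@mpow_ideal R N) hno.
  have : (rn i - rn j) *: u = 0.
    by rewrite scalerBl -(hrn i u (En_le hi hu)) -(hrn j u (En_le hj hu)) subrr.
  by rewrite hxu => /eqP; rewrite (negbTE (e0_neq0 hE)).
have [y hy] := hcompl cauchy.
exists y => n v hv.
have [N hN] := hy n.
have hi : (n <= maxn N n)%N := leq_maxr _ _.
rewrite (hrn (maxn N n)); last exact: (En_le hi hv).
apply/eqP; rewrite -subr_eq0 -scalerBl; apply/eqP; apply: hv; apply: hN; exact: leq_maxl.
Qed.

Lemma uniq_scal (c : R) : (forall n v, En n v -> c *: v = 0) -> c = 0.
Proof.
move=> hc; apply: NNPP => cn0.
have hI : is_ideal (fun z : R => z = 0).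
  split; first by [].
  by split; [move=> x y -> ->; rewrite addr0 | move=> r x ->; rewrite mulr0].
have : ~ (forall n, exists i b, i = 0 /\ mpow n b /\ c = i + b).
  move=> h; apply: cn0; exact: (krull hnoeth hloc hI h).
move=> /not_all_ex_not [n hn].
have hnc : ~ mpow n c by move=> h; apply: hn; exists 0, c; rewrite add0r.
have [u [hu hcu]] := detect hE (@mpow_ideal R n) hnc.
by move: (hc n u hu); rewrite hcu => /eqP; rewrite (negbTE (e0_neq0 hE)).
Qed.
End Endo.



Lemma trace_ideal (R : comUnitRingType) (L : lmodType R) (S : L -> Prop) : is_ideal (trace_SL S).
Proof.
split.
  by exists 0%N, (fun _ => 0), (fun _ => \0), (fun _ => 0); split => [[]//|]; rewrite big_ord0.
split.
- move=> x y [k1 [r1 [f1 [s1 [h1 ->]]]]] [k2 [r2 [f2 [s2 [h2 ->]]]]].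
  exists (k1 + k2)%N, (catf r1 r2), (catf f1 f2), (catf s1 s2); split; first exact: catfP.
  rewrite big_split_ord /catf; congr (_ + _); apply: eq_bigr => i _.
  + by rewrite (unsplitK (inl i)).
  + by rewrite (unsplitK (inr i)).
- move=> r x [k [r1 [f1 [s1 [h1 ->]]]]].
  exists k, (fun i => r * r1 i), f1, s1; split => //.
  by rewrite mulr_sumr; apply: eq_bigr => i _; rewrite mulrA.
Qed.

Unset Implicit Arguments.

Theorem theorem7p19 (R : comUnitRingType)
  (hnoeth : noetherian R) (hloc : local_ring R) (hcompl : madic_complete R)
  (E : lmodType R) (e0 : E) (hE : injective_hull_of_residue e0)
  (L : lmodType R) (S : L -> Prop) :
  forall x : R, trace_SL S x <-> annihilator (zero_cl S (N:=E)) x.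
Proof.
move=> x; split.
- move=> [k [r [f [s [hs ->]]]]] u hu.
  rewrite scaler_suml; apply: big1 => i _.
  rewrite -scalerA.
  have hb : bilinear_map (fun (l : L) (v : E) => (f i l : R) *: v).
    split.
    + by move=> a l1 l2 n; rewrite linearD linearZ /= scalerDl scalerA.
    + by move=> a l n1 n2; rewrite scalerDr !scalerA (mulrC a).
  by rewrite (hu (s i) (hs i) E _ hb) scaler0.
- move=> hx; apply: NNPP => hnx.
  have htr := trace_ideal S.
  have : ~ (forall n, exists i b, trace_SL S i /\ mpow n b /\ x = i + b).
    by move=> h; apply: hnx; exact: (krull hnoeth hloc htr h).
  move=> /not_all_ex_not [n hn].
  pose K z := exists i b, trace_SL S i /\ mpow n b /\ z = i + b.
  have hK : is_ideal K.
    case: htr => t0 [tD tM]; case: (mpow_ideal R n) => m0 [mD mM].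
    split; first by exists 0, 0; rewrite addr0.
    split.
    + move=> y z [i1 [b1 [h1 [hb1 ->]]]] [i2 [b2 [h2 [hb2 ->]]]].
      by exists (i1 + i2), (b1 + b2); split; [exact: tD|split; [exact: mD|rewrite addrACA]].
    + move=> r y [i [b [hi [hb ->]]]].
      by exists (r * i), (r * b); split; [exact: tM|split; [exact: mM|rewrite mulrDr]].
  have [u [hu hxu]] := detect hE hK hn.
  have huE : En n u by move=> a ha; apply: hu; exists 0, a; rewrite add0r; split => //; case: htr.
  suff hcl : zero_cl S u.
    by move: (hx u hcl); rewrite hxu => /eqP; rewrite (negbTE (e0_neq0 hE)).
  move=> s hs M b hb; apply: NNPP => hw.
  have [pi hpi] := cogen hE (introN eqP hw).
  have hlin l : lin (fun v => pi (b l v)).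
    by move=> r v1 v2; rewrite (proj2 hb) linearD linearZ.
  pose g l := sval (cid (endo hnoeth hcompl hE (hlin l))).
  have hg l m v : En m v -> pi (b l v) = g l *: v := svalP (cid (endo hnoeth hcompl hE (hlin l))) m v.
  have glin : linear (g : L -> R^o).
    move=> a l1 l2; apply/eqP; rewrite -subr_eq0; apply/eqP.
    apply: (uniq_scal hnoeth hloc hE) => m v hv.
    rewrite scalerBl -(hg _ m v hv) (proj1 hb) linearD linearZ /= (hg l1 m v hv) (hg l2 m v hv).
    by rewrite scalerDl scalerA subrr.
  have htg : trace_SL S (g s).
    exists 1%N, (fun _ => 1), (fun _ => mkLin glin), (fun _ => s); split => //.
    by rewrite big_ord1 mul1r.
  have : pi (b s u) = 0.
    rewrite (hg s n u huE); apply: hu; exists (g s), 0; rewrite addr0; split => //.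
    by split => //; case: (mpow_ideal R n).
  by rewrite hpi => /eqP; rewrite (negbTE (e0_neq0 hE)).
Qed.
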